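(* For $NX\in\{2A,3A,3C\}$: (i) the identity of $V_{NX}$ is the unique decomposable idempotent of $V_{NX}$; (ii) there are no non-trivial associative subalgebras of $V_{NX}$.
   Context: The Norton–Sakuma algebras considered (real commutative algebras with identity and positive definite inner product $(\,,)$): $V_{2A}$ has basis $a_0,a_1,a_2$ with $a_i\cdot a_i=a_i$, $a_i\cdot a_j=\frac18(a_i+a_j-a_k)$ for $\{i,j,k\}=\{0,1,2\}$, $(a_i,a_i)=1$, $(a_i,a_j)=\frac18$ for $i\neq j$. $V_{3C}$ has basis $a_0,a_1,a_2$ with $a_i\cdot a_i=a_i$, $a_i\cdot a_j=\frac1{64}(a_i+a_j-a_k)$ for $\{i,j,k\}=\{0,1,2\}$, $(a_i,a_i)=1$, $(a_i,a_j)=\frac1{64}$ for $i\ne j$. $V_{3A}$ has basis $a_0,a_1,a_2,u$ with $a_i\cdot a_i=a_i$, $u\cdot u=u$, $a_i\cdot a_j=\frac1{32}(2a_i+2a_j+a_k)-\frac{135}{2^{11}}u$ and $a_i\cdot u=\frac19(2a_i-a_j-a_k)+\frac5{32}u$ for $\{i,j,k\}=\{0,1,2\}$, $(a_i,a_i)=1$, $(a_i,a_j)=\frac{13}{2^8}$ for $i\neq j$, $(a_i,u)=\frac14$, $(u,u)=\frac85$. (These are the subalgebras of the Griess algebra generated by two $2A$-axes whose involutions have product in Monster class $2A$, $3C$, $3A$ respectively.) An idempotent is decomposable if it is a sum of at least two non-zero idempotents. For a non-zero idempotent $x\neq\mathbb 1$, $V_x$ is the span of $\{x,\mathbb 1-x\}$;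 also $V_0$, $V_{\mathbb 1}$ are the subalgebras generated by $0$ and $\mathbb 1$. An associative subalgebra is trivial if it equals $V_x$ for some idempotent $x$, non-trivial otherwise. *)

(* Defs.v *)
From HB Require Import structures.
From mathcomp Require Import all_boot all_order all_algebra.
From mathcomp Require Import reals.
Set Implicit Arguments. Unset Strict Implicit. Unset Printing Implicit Defensive.
Import Order.TTheory GRing.Theory Num.Theory.
Local Open Scope ring_scope.

Section Generic.
Variables (R : fieldType) (n : nat).

Definition tabmul (T : 'I_n -> 'I_n -> 'rV[R]_n) (u v : 'rV[R]_n) : 'rV[R]_n :=
  \sum_(i < n) \sum_(j < n) (u 0 i * v 0 j) *: T i j.

Variable mul : 'rV[R]_n -> 'rV[R]_n -> 'rV[R]_n.

Definition is_idempotent (x : 'rV[R]_n) : Prop := mul x x = x.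

Definition is_identity (e : 'rV[R]_n) : Prop :=
  forall x, mul e x = x /\ mul x e = x.

Definition decomposable (x : 'rV[R]_n) : Prop :=
  is_idempotent x /\
  exists s : seq 'rV[R]_n,
    (2 <= size s)%N /\
    (forall y, y \in s -> y != 0 /\ is_idempotent y) /\
    x = \sum_(y <- s) y.

Definition is_subalgebra (one : 'rV[R]_n) (A : {vspace 'rV[R]_n}) : Prop :=
  one \in A /\ (forall u v, u \in A -> v \in A -> mul u v \in A).

Definition is_associative_on (A : {vspace 'rV[R]_n}) : Prop :=
  forall u v w, u \in A -> v \in A -> w \in A ->
    mul (mul u v) w = mul u (mul v w).

(* V_x = span{x, 1 - x}; for x = 0 or 1 this is span{1} *)
Definition Vx (one x : 'rV[R]_n) : {vspace 'rV[R]_n} := (<[x]> + <[one - x]>)%VS.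

Definition trivial_assoc (one : 'rV[R]_n) (A : {vspace 'rV[R]_n}) : Prop :=
  exists x, is_idempotent x /\ A = Vx one x.

Definition NS_claim : Prop :=
  exists one : 'rV[R]_n, is_identity one /\
    (decomposable one /\ forall x, decomposable x -> x = one) /\
    (forall A, is_subalgebra one A -> is_associative_on A -> trivial_assoc one A).

End Generic.

Section NortonSakuma.
Variable R : realType.

Definition bvec (m : nat) (k : nat) : 'rV[R]_m.+1 := delta_mx 0 (inord k).

(* V_2A and V_3C: basis a_0,a_1,a_2 ; a_i a_j = c (a_i + a_j - a_k) *)
Definition tab_ac (c : R) (i j : 'I_3) : 'rV[R]_3 :=
  if i == j then bvec 2 i
  else c *: (bvec 2 i + bvec 2 j - bvec 2 (3 - (i + j))).

Definition mul2A := tabmul (tab_ac (1/8)).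
Definition mul3C := tabmul (tab_ac (1/64)).

(* V_3A: basis a_0,a_1,a_2,u with u the basis vector of index 3 *)
Definition tab3A (i j : 'I_4) : 'rV[R]_4 :=
  let a := nat_of_ord i in let b := nat_of_ord j in
  if (a < 3)%N && (b < 3)%N then
    (if a == b then bvec 3 a
     else (1/32) *: (2 *: bvec 3 a + 2 *: bvec 3 b + bvec 3 (3 - (a + b)))
          - (135 / 2 ^+ 11) *: bvec 3 3)
  else if (a == 3%N) && (b == 3%N) then bvec 3 3
  else let c := if a == 3%N then b else a in
       (1/9) *: (2 *: bvec 3 c - bvec 3 ((c + 1) %% 3) - bvec 3 ((c + 2) %% 3))
       + (5/32) *: bvec 3 3.

Definition mul3A := tabmul tab3A.

End NortonSakuma.

(* Main.v *)
Require Import Defs.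
From HB Require Import structures.
From mathcomp Require Import all_boot all_order all_algebra.
From mathcomp Require Import reals.
From mathcomp Require Import ring lra.
Set Implicit Arguments. Unset Strict Implicit. Unset Printing Implicit Defensive.
Import Order.TTheory GRing.Theory Num.Theory.
Local Open Scope ring_scope.




Lemma cubic_root (R : realType) (al be ga : R) :
  exists la : R, la ^+ 3 = ga * la ^+ 2 + be * la + al.
Proof.
pose p : {poly R} := 'X^3 - (ga%:P * 'X^2 + be%:P * 'X + al%:P).
pose M := 1 + `|al| + `|be| + `|ga|.
have M1 : 1 <= M by rewrite /M; have := normr_ge0 al; have := normr_ge0 be; have := normr_ge0 ga; lra.
have M0 : 0 <= M ^+ 2 by rewrite sqr_ge0.
have h1 : ga * M ^+ 2 <= `|ga| * M ^+ 2 by rewrite ler_wpM2r // ler_norm.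
have h1' : - ga * M ^+ 2 <= `|ga| * M ^+ 2 by rewrite ler_wpM2r // -normrN ler_norm.
have h2 : be * M <= `|be| * M ^+ 2.
  apply: (le_trans (ler_norm _)); rewrite normrM (ger0_norm (le_trans ler01 M1)).
  by rewrite expr2 mulrA ler_peMr // mulr_ge0 // (le_trans ler01 M1).
have h2' : - be * M <= `|be| * M ^+ 2.
  apply: (le_trans (ler_norm _)); rewrite normrM normrN (ger0_norm (le_trans ler01 M1)).
  by rewrite expr2 mulrA ler_peMr // mulr_ge0 // (le_trans ler01 M1).
have h3 : al <= `|al| * M ^+ 2.
  apply: (le_trans (ler_norm _)); rewrite ler_peMr //.
  by rewrite -[1](expr1n _ 2) lerXn2r // ?nnegrE // (le_trans ler01 M1).
have h3' : - al <= `|al| * M ^+ 2.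
  apply: (le_trans (ler_norm _)); rewrite normrN ler_peMr //.
  by rewrite -[1](expr1n _ 2) lerXn2r // ?nnegrE // (le_trans ler01 M1).
have hM3 : M ^+ 3 = M ^+ 2 + `|al| * M ^+ 2 + `|be| * M ^+ 2 + `|ga| * M ^+ 2.
  by rewrite /M; ring.
have hm3 : (- M) ^+ 3 = - M ^+ 3 by rewrite exprNn; ring.
have hm2 : (- M) ^+ 2 = M ^+ 2 by rewrite sqrrN.
have [x _ rx] : exists2 x, - M <= x <= M & root p x.
  apply: poly_ivt; first by lra.
  have e1 : p.[- M] = - M ^+ 3 - ga * M ^+ 2 + be * M - al by rewrite /p !(hornerD, hornerN, hornerM, hornerC, hornerX, hornerXn, horner_exp); ring.
  have e2 : p.[M] = M ^+ 3 - ga * M ^+ 2 - be * M - al by rewrite /p !(hornerD, hornerN, hornerM, hornerC, hornerX, hornerXn, horner_exp); ring.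
  rewrite e1 e2 hM3; apply/andP; split; lra.
exists x; move: rx; rewrite /root /p !(hornerD, hornerN, hornerM, hornerC, hornerX, hornerXn, horner_exp) => /eqP h.
by apply/eqP; rewrite -subr_eq0 h.
Qed.

Section Gen.
Variables (R : realType) (n : nat).
Local Notation V := 'rV[R]_n.
Variables (mul : V -> V -> V) (one : V) (t : V -> R).
Hypothesis mmulDl : forall u v w, mul (u + v) w = mul u w + mul v w.
Hypothesis mmulZl : forall a u w, mul (a *: u) w = a *: mul u w.
Hypothesis mmulC : forall u v, mul u v = mul v u.
Hypothesis mmul1 : forall u, mul one u = u.
Hypothesis tD : forall u v, t (u + v) = t u + t v.
Hypothesis tZ : forall a u, t (a *: u) = a * t u.
Hypothesis tpos : forall u, u != 0 -> 0 < t (mul u u).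
Hypothesis one0 : one != 0.

Lemma mmulDr u v w : mul u (v + w) = mul u v + mul u w.
Proof. by rewrite mmulC mmulDl !(mmulC u). Qed.
Lemma mmulZr a u w : mul u (a *: w) = a *: mul u w.
Proof. by rewrite mmulC mmulZl mmulC. Qed.
Lemma mmulNl u w : mul (- u) w = - mul u w.
Proof. by rewrite -scaleN1r mmulZl scaleN1r. Qed.
Lemma mmulNr u w : mul u (- w) = - mul u w.
Proof. by rewrite -scaleN1r mmulZr scaleN1r. Qed.
Lemma mmul0l w : mul 0 w = 0.
Proof. by have := mmulZl 0 0 w; rewrite !scale0r. Qed.
Lemma mmul0r w : mul w 0 = 0.
Proof. by rewrite mmulC mmul0l. Qed.
Lemma mmul1r u : mul u one = u.
Proof. by rewrite mmulC mmul1. Qed.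
Lemma t0 : t 0 = 0.
Proof. by have := tZ 0 0; rewrite scale0r mul0r. Qed.

Ltac mexp := rewrite ?(mmulDl, mmulDr, mmulZl, mmulZr, mmulNl, mmulNr, mmul0l, mmul0r, mmul1, mmul1r).
Ltac veq := apply/rowP => ?; rewrite !mxE.

Lemma quad_idem e y a b : mul e e = e -> mul e y = y ->
  mul y y = a *: e + b *: y -> y \notin <[e]>%VS ->
  exists g, [/\ mul g g = g, mul e g = g, g \in (<[e]> + <[y]>)%VS,
     y \in (<[g]> + <[e - g]>)%VS & (g != 0) && (g != e)].
Proof.
move=> ee ey yy ny.
have e0 : e != 0.
  by apply: contraNneq ny => e0; move: ey; rewrite e0 mmul0l => <-; rewrite mem0v.
pose w := y - (b / 2) *: e.
have wE : w = y - (b / 2) *: e by [].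
clearbody w.
have ew : mul e w = w by rewrite wE; mexp; rewrite ey ee.
have ww : mul w w = (a + b ^+ 2 / 4) *: e.
  by rewrite wE; mexp; rewrite ee ey yy (mmulC y e) ey; veq; field.
have w0 : w != 0.
  apply: contraNneq ny => /eqP; rewrite wE subr_eq0 => /eqP ->.
  by rewrite memvZ ?memv_line.
have te : 0 < t e by rewrite -ee; apply: tpos.
have gpos : 0 < a + b ^+ 2 / 4.
  by have := tpos w0; rewrite ww tZ pmulr_lgt0.
pose sg := Num.sqrt (a + b ^+ 2 / 4).
have sg0 : 0 < sg by rewrite sqrtr_gt0.
have sg2 : sg ^+ 2 = a + b ^+ 2 / 4 by rewrite sqr_sqrtr // ltW.
have sgn0 : sg != 0 by rewrite gt_eqF.
pose g := (1 / 2) *: (e + sg^-1 *: w).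
have gE : g = (1 / 2) *: (e + sg^-1 *: w) by [].
clearbody g.
have eg : mul e g = g by rewrite gE; mexp; rewrite ee ew.
have gg : mul g g = g.
  by rewrite gE; mexp; rewrite ee ew (mmulC w e) ew ww -sg2; veq; field; rewrite sgn0.
have yg : y = (2 * sg) *: g + (b / 2 - sg) *: e.
  by rewrite gE wE; veq; field.
exists g; split => //.
- apply/memv_addP; exists ((1/2 - sg^-1 * b / 4) *: e); first by rewrite memvZ ?memv_line.
  exists ((sg^-1 / 2) *: y); first by rewrite memvZ ?memv_line.
  by rewrite gE wE; veq; field.
- apply/memv_addP; exists ((sg + b / 2) *: g); first by rewrite memvZ ?memv_line.
  exists ((b / 2 - sg) *: (e - g)); first by rewrite memvZ ?memv_line.
  by rewrite {1}yg; veq; ring.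
- apply/andP; split.
  + apply: contraNneq ny => g0; rewrite yg g0 scaler0 add0r.
    by rewrite memvZ ?memv_line.
  + apply: contraNneq ny => ge; rewrite yg ge -scalerDl.
    by rewrite memvZ ?memv_line.
Qed.


Lemma vline0 : (<[0]> = 0 :> {vspace V})%VS.
Proof. by apply/eqP; rewrite -dimv_eq0 dim_vline eqxx. Qed.

Lemma dim_add_line (W : {vspace V}) x : x \notin W -> \dim (W + <[x]>) = (\dim W).+1.
Proof.
move=> xW; have x0 : x != 0 by apply: contraNneq xW => ->; rewrite mem0v.
rewrite dimv_disjoint_sum ?dim_vline ?x0 ?addn1 //.
apply/eqP; rewrite -subv0; apply/subvP => y /memv_capP[yW /vlineP[k yk]].
rewrite memv0; apply/eqP; rewrite yk.
have [->|k0] := eqVneq k 0; first by rewrite scale0r.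
case/negP: xW; have -> : x = k^-1 *: y by rewrite yk scalerA mulVf ?scale1r.
by rewrite memvZ.
Qed.

Lemma exists_out (W A : {vspace V}) : (\dim W < \dim A)%N -> exists2 v, v \in A & v \notin W.
Proof.
move=> lt; apply/subvPn; apply: contraL lt => /dimvS le; by rewrite -leqNgt.
Qed.

Lemma eq_dim (W A : {vspace V}) : (W <= A)%VS -> (\dim A <= \dim W)%N -> W = A.
Proof. by move=> s d; apply/eqP; rewrite eqEdim s d. Qed.

Lemma dim_one : \dim <[one]> = 1%N.
Proof. by rewrite dim_vline one0. Qed.

Lemma dim1_case A : is_subalgebra mul one A -> \dim A = 1%N -> trivial_assoc mul one A.
Proof.
case=> oneA _ dA; exists one; split; first exact: mmul1.
rewrite /Vx subrr vline0 addv0; apply/esym/eq_dim; first by rewrite -memvE.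
by rewrite dA dim_one.
Qed.

Lemma dim2_case A : is_subalgebra mul one A -> \dim A = 2%N -> trivial_assoc mul one A.
Proof.
case=> oneA clos dA.
have [v vA vn] : exists2 v, v \in A & v \notin <[one]>%VS.
  by apply: exists_out; rewrite dim_one dA.
have WA : (<[one]> + <[v]> <= A)%VS by rewrite subv_add -!memvE oneA vA.
have eqA : (<[one]> + <[v]>)%VS = A.
  by apply: eq_dim => //; rewrite dim_add_line // dim_one dA.
have : mul v v \in (<[one]> + <[v]>)%VS by rewrite eqA clos.
case/memv_addP => _ /vlineP[a ->] [_ /vlineP[b ->] vv].
have [g [gg eg gW yW /andP[g0 g1]]] := quad_idem (mmul1 one) (mmul1 v) vv vn.
exists g; split => //; apply/subv_anti/andP; split.
- rewrite -eqA subv_add -!memvE yW andbT.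
  by have := memv_add (memv_line (one - g)) (memv_line g); rewrite subrK addvC.
- rewrite subv_add -!memvE; rewrite eqA in gW.
  by rewrite gW memvB // -eqA memv_add ?memv_line ?mem0v.
Qed.


Section Dim3.
Variable A : {vspace V}.
Hypothesis oneA : one \in A.
Hypothesis clos : forall u v, u \in A -> v \in A -> mul u v \in A.
Hypothesis assoc : is_associative_on mul A.
Hypothesis dA : \dim A = 3%N.
Hypothesis uniq_dec : forall x, decomposable mul x -> x = one.

Lemma step3 e y : e \in A -> mul e e = e -> e != 0 -> e != one ->
  y \in A -> mul e y = y -> mul (one - e) y = 0 -> y \notin <[e]>%VS -> False.
Proof.
move=> eA ee e0 e1 yA ey fy ny.
pose f := one - e.
have fE : f = one - e by [].
clearbody f.
rewrite -fE in fy.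
have fA : f \in A by rewrite fE memvB.
have ef : mul f e = 0 by rewrite fE; mexp; rewrite ee subrr.
have ff : mul f f = f by rewrite fE; mexp; rewrite ee; veq; ring.
have f0 : f != 0 by rewrite fE subr_eq0 eq_sym.
have nf : f \notin (<[e]> + <[y]>)%VS.
  apply/negP => /memv_addP[_ /vlineP[a ->] [_ /vlineP[b ->] fab]].
  move/negP: f0; apply; apply/eqP.
  by rewrite -ff {2}fab; mexp; rewrite ef fy !scaler0 addr0.
have eqA : (<[e]> + <[y]> + <[f]>)%VS = A.
  apply: eq_dim; first by rewrite !subv_add -!memvE eA yA fA.
  by rewrite dA !dim_add_line // dim_vline e0.
have : mul y y \in (<[e]> + <[y]> + <[f]>)%VS by rewrite eqA clos.
case/memv_addP => _ /memv_addP[_ /vlineP[a ->] [_ /vlineP[b ->] ->]] [_ /vlineP[c ->] yy].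
have c0 : c = 0.
  have : mul f (mul y y) = 0 by rewrite -assoc // fy mmul0l.
  rewrite yy; mexp; rewrite ef fy ff !scaler0 !add0r => /eqP.
  by rewrite scaler_eq0 (negbTE f0) orbF => /eqP.
rewrite c0 scale0r addr0 in yy.
have [g [gg eg _ _ /andP[g0 g1]]] := quad_idem ee ey yy ny.
move/negP: e1; apply; apply/eqP; apply: uniq_dec; split => //.
exists [:: g; e - g]; split => //; split; last by rewrite !big_cons big_nil addr0 addrCA subrr addr0.
move=> z; rewrite !inE => /orP[] /eqP ->; split => //.
- by rewrite subr_eq0 eq_sym.
- rewrite /is_idempotent; mexp; rewrite ee eg (mmulC g e) eg gg; veq; ring.
Qed.

Lemma exists_idem : exists e, [/\ e \in A, mul e e = e, e != 0 & e != one].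
Proof.
have [v vA vn] : exists2 v, v \in A & v \notin <[one]>%VS.
  by apply: exists_out; rewrite dim_one dA.
have [h|h] := boolP (mul v v \in (<[one]> + <[v]>)%VS).
  case/memv_addP: h => _ /vlineP[a ->] [_ /vlineP[b ->] vv].
  have [g [gg eg gW yW /andP[g0 g1]]] := quad_idem (mmul1 one) (mmul1 v) vv vn.
  exists g; split => //.
  have WA : (<[one]> + <[v]> <= A)%VS by rewrite subv_add -!memvE oneA vA.
  by move/subvP: WA; apply.
have vvA : mul v v \in A by apply: clos.
have eqA : (<[one]> + <[v]> + <[mul v v]>)%VS = A.
  apply: eq_dim; first by rewrite !subv_add -!memvE oneA vA vvA.
  by rewrite dA !dim_add_line // dim_one.
have : mul v (mul v v) \in (<[one]> + <[v]> + <[mul v v]>)%VS by rewrite eqA clos.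
case/memv_addP => _ /memv_addP[_ /vlineP[al ->] [_ /vlineP[be ->] ->]] [_ /vlineP[ga ->] v3].
have [la hla] := cubic_root al be ga.
pose b := la - ga.
pose c := la * b - be.
pose y := mul v v + b *: v + c *: one.
have yE : y = mul v v + b *: v + c *: one by [].
clearbody y.
have yA : y \in A by rewrite yE !memvD // memvZ.
have ny : y \notin <[one]>%VS.
  apply: contra h => /vlineP[k yk].
  have -> : mul v v = (k - c) *: one + (- b) *: v.
    by rewrite -[mul v v](addrK (b *: v + c *: one)) addrA -yE yk; veq; ring.
  by rewrite memv_add // memvZ // memv_line.
have y0 : y != 0 by apply: contraNneq ny => ->; rewrite mem0v.
have hal : al = la ^+ 3 - ga * la ^+ 2 - be * la by rewrite hla; ring.
have vy : mul v y = la *: y.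
  rewrite yE; mexp; rewrite v3 /c /b hal; veq; ring.
have yy : mul y y = (la ^+ 2 + b * la + c) *: y.
  rewrite {1}yE; mexp; rewrite assoc // vy mmulZr !vy; veq; ring.
have [mu0|mun0] := eqVneq (la ^+ 2 + b * la + c) 0.
  by have := tpos y0; rewrite yy mu0 scale0r t0 ltxx.
exists ((la ^+ 2 + b * la + c)^-1 *: y); split.
- by rewrite memvZ.
- rewrite mmulZl mmulZr yy !scalerA; congr (_ *: _); field.
  by rewrite mun0.
- by rewrite scaler_eq0 invr_eq0 negb_or mun0.
- apply: contra ny => /eqP hy.
  have -> : y = (la ^+ 2 + b * la + c) *: one by rewrite -hy scalerA mulfV ?scale1r.
  by rewrite memvZ // memv_line.
Qed.

Lemma dim3_false : False.
Proof.
have [e [eA ee e0 e1]] := exists_idem.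
pose f := one - e.
have fE : f = one - e by [].
clearbody f.
have fA : f \in A by rewrite fE memvB.
have ef : mul f e = 0 by rewrite fE; mexp; rewrite ee subrr.
have ff : mul f f = f by rewrite fE; mexp; rewrite ee; veq; ring.
have f0 : f != 0 by rewrite fE subr_eq0 eq_sym.
have [z zA zn] : exists2 z, z \in A & z \notin (<[e]> + <[f]>)%VS.
  apply: exists_out; rewrite dA.
  have := dimv_sum_cap <[e]> <[f]>; rewrite !dim_vline e0 f0 /= => h.
  have := leq_addr (\dim (<[e]> :&: <[f]>)%VS) (\dim (<[e]> + <[f]>)%VS).
  by rewrite h => /leq_ltn_trans; apply.
have zE : z = mul e z + mul f z by rewrite -mmulDl fE addrC subrK mmul1.
have [ezn|] := boolP (mul e z \notin <[e]>%VS).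
  apply: (step3 eA ee e0 e1 (clos eA zA)).
  - by rewrite -assoc // ee.
  - by rewrite -fE -assoc // ef mmul0l.
  - exact: ezn.
rewrite negbK => /vlineP[k ez].
have [fzn|] := boolP (mul f z \notin <[f]>%VS).
  have eE : one - f = e by rewrite fE opprB addrC subrK.
  apply: (step3 fA ff f0 _ (clos fA zA)).
  - by apply: contraNneq e0 => f1; rewrite -eE f1 subrr.
  - by rewrite -assoc // ff.
  - by rewrite eE -assoc // (mmulC e f) ef mmul0l.
  - exact: fzn.
rewrite negbK => /vlineP[k' fz].
by case/negP: zn; rewrite zE ez fz memv_add // memvZ // memv_line.
Qed.
End Dim3.

Section Final.
Variable bnd : R.
Hypothesis bnd1 : 1 <= bnd.
Hypothesis bnd2 : bnd <= 2.
Hypothesis hval : forall y, mul y y = y -> y != 0 -> 1 <= t y /\ (t y = 1 \/ bnd <= t y).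
Hypothesis hbig : forall x, mul x x = x -> (t x = 2 \/ 1 + bnd <= t x) -> x = one.

Lemma gen_uniq x : decomposable mul x -> x = one.
Proof.
case=> xi [s [hs [hy hx]]]; apply: hbig => //.
have tx : t x = \sum_(y <- s) t y by rewrite hx; apply: (big_morph t tD t0).
case: s hs hy tx {hx} => [|a [|b s']] //= _ hy tx.
have [a0 ai] := hy a (mem_head _ _).
have hbm : b \in [:: a, b & s'] by rewrite !inE eqxx orbT.
have [b0 bi] := hy b hbm.
have [ha1 ha2] := hval ai a0; have [hb1 hb2] := hval bi b0.
rewrite !big_cons in tx.
clear hbm.
case: s' hy tx => [|c s''] hy tx.
  rewrite big_nil addr0 in tx.
  by case: ha2 => ha2; case: hb2 => hb2; [left|right|right|right]; lra.
have hcm : c \in [:: a, b, c & s''] by rewrite !inE eqxx !orbT.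
have [c0 ci] := hy c hcm.
have [hc1 _] := hval ci c0.
rewrite big_cons in tx; move: tx; set S := \sum_(j <- s'') _ => tx.
have hr : 0 <= S.
  rewrite /S big_seq; apply: sumr_ge0 => y ys.
  have hym : y \in [:: a, b, c & s''] by rewrite !inE ys !orbT.
  have [y0 yi] := hy y hym.
  by have [hy1 _] := hval yi y0; lra.
right; clearbody S; have tx2 : t x = t a + t b + t c + S by rewrite tx !addrA.
clear tx; move: (t a) (t b) (t c) (t x) S ha1 hb1 hc1 hr tx2 bnd2 => ta tb tc tx0 S0 *; lra.
Qed.

Hypothesis dec_one : decomposable mul one.
Hypothesis big : forall A : {vspace V}, (4 <= \dim A)%N -> is_associative_on mul A -> False.

Lemma gen_claim : NS_claim mul.
Proof.
exists one; split; first by move=> x; rewrite mmul1 mmul1r.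
split; first by split => //; exact: gen_uniq.
move=> A sA aA; have [oneA clos] := sA.
have sub1 : (<[one]> <= A)%VS by rewrite -memvE.
have d1 : (1 <= \dim A)%N by have := dimvS sub1; rewrite dim_one.
case dA: (\dim A) d1 => [//|[|[|[|m]]]] _.
- exact: dim1_case.
- exact: dim2_case.
- by case: (dim3_false oneA clos aA dA gen_uniq).
- by case: (big (A := A) _ aA); rewrite dA.
Qed.
End Final.

End Gen.


Definition Eac (R : realType) (c p q r : R) := p ^+ 2 + 2 * c * (p * q + p * r - q * r) - p.

Lemma solve_lin (R : realType) (a p : R) : a != 0 -> a * p - 1 = 0 -> p = a^-1.
Proof.
move=> a0 h; apply: (mulfI a0); rewrite mulfV //.
by apply/eqP; rewrite -subr_eq0 h.
Qed.

Lemma quad0 (R : realType) (c p : R) : 1 + 2 * c != 0 ->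
  (1 + 2 * c) * p ^+ 2 - p = 0 -> p = 0 \/ p = (1 + 2 * c)^-1.
Proof.
move=> h0 h.
have : p * ((1 + 2 * c) * p - 1) = 0 by rewrite -h; ring.
move/eqP; rewrite mulf_eq0 => /orP[/eqP e|/eqP e]; [by left|right].
exact: solve_lin.
Qed.

Lemma ac_class (R : realType) (c p q r : R) : 4 * c != 1 -> 1 + 2 * c != 0 ->
  Eac c p q r = 0 -> Eac c q p r = 0 -> Eac c r p q = 0 ->
  [\/ [/\ p = 0, q = 0 & r = 0], [/\ p = (1 + 2 * c)^-1, q = (1 + 2 * c)^-1 & r = (1 + 2 * c)^-1],
      p + q + r = 1 | p + q + r = 3 * (1 + 2 * c)^-1 - 1].
Proof.
move=> c4 c2 hp hq hr.
have h01 : (p - q) * (p + q + 4 * c * r - 1) = 0.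
  by rewrite -[RHS](subrr 0) -{1}hp -hq /Eac; ring.
have h02 : (p - r) * (p + r + 4 * c * q - 1) = 0.
  by rewrite -[RHS](subrr 0) -{1}hp -hr /Eac; ring.
move: h01 h02 => /eqP; rewrite mulf_eq0 subr_eq0 => /orP[/eqP epq|/eqP l01] /eqP;
  rewrite mulf_eq0 subr_eq0 => /orP[/eqP epr|/eqP l02].
- subst q r.
  have : (1 + 2 * c) * p ^+ 2 - p = 0 by rewrite -hp /Eac; ring.
  by case/quad0 => // ->; [constructor 1|constructor 2].
- subst q.
  have er : r = 1 - p - 4 * c * p by rewrite -[r]subr0 -l02; ring.
  have : (1 + 2 * c) * p ^+ 2 - p = 0 by rewrite -hp /Eac; ring.
  case/quad0 => // ep; [constructor 3|constructor 4]; rewrite er ep; first by ring.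
  by field.
- subst r.
  have eq' : q = 1 - p - 4 * c * p by rewrite -[q]subr0 -l01; ring.
  have : (1 + 2 * c) * p ^+ 2 - p = 0 by rewrite -hp /Eac; ring.
  case/quad0 => // ep; [constructor 3|constructor 4]; rewrite eq' ep; first by ring.
  by field.
- have : (q - r) * (1 - 4 * c) = 0 by rewrite -[RHS](subrr 0) -{1}l01 -l02; ring.
  move/eqP; rewrite mulf_eq0 subr_eq0 [1 - _ == 0]subr_eq0 [1 == _]eq_sym (negbTE c4) orbF => /eqP eqr.
  subst r.
  have ep : p = 1 - q - 4 * c * q by rewrite -[p]subr0 -l01; ring.
  have : (1 + 2 * c) * q ^+ 2 - q = 0 by rewrite -hq /Eac; ring.
  case/quad0 => // e; [constructor 3|constructor 4]; rewrite ep e; first by ring.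
  by field.
Qed.


Lemma big3 (R : realType) (F : 'I_3 -> R) : \sum_(i < 3) F i = F (inord 0) + F (inord 1) + F (inord 2).
Proof.
rewrite !big_ord_recl big_ord0 addr0 addrA; congr (F _ + F _ + F _); apply/val_inj; by rewrite /= inordK.
Qed.

Lemma inord_eq m i j : (i <= m)%N -> (j <= m)%N -> ((inord i : 'I_m.+1) == inord j) = (i == j).
Proof. by move=> hi hj; rewrite -val_eqE /= !inordK. Qed.

Lemma bvecE (R : realType) m i k : (i <= m)%N -> (k <= m)%N -> (bvec R m i) 0 (inord k) = (k == i)%:R.
Proof. by move=> hi hk; rewrite /bvec mxE eqxx /= inord_eq. Qed.

Lemma tabmulE (R : realType) n (T : 'I_n -> 'I_n -> 'rV[R]_n) u v k :
  tabmul T u v 0 k = \sum_(i < n) \sum_(j < n) u 0 i * v 0 j * T i j 0 k.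
Proof. by rewrite /tabmul summxE; apply: eq_bigr => i _; rewrite summxE; apply: eq_bigr => j _; rewrite mxE. Qed.

Lemma tabmulDl (R : realType) n (T : 'I_n -> 'I_n -> 'rV[R]_n) u v w :
  tabmul T (u + v) w = tabmul T u w + tabmul T v w.
Proof.
rewrite /tabmul -big_split; apply: eq_bigr => i _; rewrite -big_split; apply: eq_bigr => j _.
by rewrite mxE mulrDl scalerDl.
Qed.

Lemma tabmulZl (R : realType) n (T : 'I_n -> 'I_n -> 'rV[R]_n) a u w :
  tabmul T (a *: u) w = a *: tabmul T u w.
Proof.
rewrite /tabmul scaler_sumr; apply: eq_bigr => i _; rewrite scaler_sumr; apply: eq_bigr => j _.
by rewrite mxE scalerA mulrA.
Qed.

Lemma ord3 (k : 'I_3) : [\/ k = inord 0, k = inord 1 | k = inord 2].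
Proof.
case: k => [[|[|[|m]]] Hk] //; [constructor 1|constructor 2|constructor 3]; apply/val_inj; by rewrite /= inordK.
Qed.

Lemma sq_pos (R : realType) (x : R) : x != 0 -> 0 < x ^+ 2.
Proof. by move=> h; rewrite exprn_even_gt0 //= h orbT. Qed.

Notation co u i := (u 0 (inord i)).

Lemma vec3 (R : realType) (u v : 'rV[R]_3) : co u 0 = co v 0 -> co u 1 = co v 1 -> co u 2 = co v 2 -> u = v.
Proof. by move=> h0 h1 h2; apply/rowP => k; case: (ord3 k) => ->. Qed.

Lemma subE (R : realType) (u v : 'rV[R]_3) i : co (u - v) i = co u i - co v i.
Proof. by rewrite !mxE. Qed.

Section ACalg.
Variables (R : realType) (c : R).
Hypothesis c0 : 0 <= c.
Hypothesis c1 : c < 1.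
Hypothesis c4 : 4 * c != 1.
Hypothesis c2 : 1 + 2 * c != 0.
Hypothesis k1 : 2 / 3 <= (1 + 2 * c)^-1.
Hypothesis k2 : (1 + 2 * c)^-1 < 1.

Local Notation mulc := (tabmul (tab_ac c)).

Ltac acsimp := rewrite tabmulE !big3 /tab_ac !inord_eq //= !inordK //= !mxE /= !inord_eq //= ?mulr1n ?mulr0n.

Lemma acE0 (u v : 'rV[R]_3) : co (mulc u v) 0 = co u 0 * co v 0 + c*(co u 0 * co v 1 + co u 1 * co v 0)
  + c*(co u 0 * co v 2 + co u 2 * co v 0) - c*(co u 1 * co v 2 + co u 2 * co v 1).
Proof. by acsimp; ring. Qed.
Lemma acE1 (u v : 'rV[R]_3) : co (mulc u v) 1 = co u 1 * co v 1 + c*(co u 1 * co v 0 + co u 0 * co v 1)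
  + c*(co u 1 * co v 2 + co u 2 * co v 1) - c*(co u 0 * co v 2 + co u 2 * co v 0).
Proof. by acsimp; ring. Qed.
Lemma acE2 (u v : 'rV[R]_3) : co (mulc u v) 2 = co u 2 * co v 2 + c*(co u 2 * co v 0 + co u 0 * co v 2)
  + c*(co u 2 * co v 1 + co u 1 * co v 2) - c*(co u 0 * co v 1 + co u 1 * co v 0).
Proof. by acsimp; ring. Qed.


Let kap := (1 + 2 * c)^-1.
Definition one_ac : 'rV[R]_3 := kap *: (bvec R 2 0 + bvec R 2 1 + bvec R 2 2).
Definition t3 (u : 'rV[R]_3) := co u 0 + co u 1 + co u 2.

Lemma one_acE i : (i <= 2)%N -> co one_ac i = kap.
Proof.
by case: i => [|[|[|//]]] _; rewrite /one_ac !mxE /= !inord_eq //= ?mulr1n ?mulr0n; ring.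
Qed.

Lemma ac_mulC u v : mulc u v = mulc v u.
Proof. by apply: vec3; rewrite ?acE0 ?acE1 ?acE2; ring. Qed.

Lemma ac_mul1 u : mulc one_ac u = u.
Proof. by apply: vec3; rewrite ?acE0 ?acE1 ?acE2 !one_acE //; rewrite /kap; field. Qed.

Lemma t3D u v : t3 (u + v) = t3 u + t3 v.
Proof. by rewrite /t3 !mxE; ring. Qed.

Lemma t3Z a u : t3 (a *: u) = a * t3 u.
Proof. by rewrite /t3 !mxE; ring. Qed.

Lemma nz3 (u : 'rV[R]_3) : u != 0 -> [\/ co u 0 != 0, co u 1 != 0 | co u 2 != 0].
Proof.
move=> u0; apply/or3P; apply: contraNT u0; rewrite !negb_or !negbK => /and3P[/eqP h0 /eqP h1 /eqP h2].
by apply/eqP; apply: vec3; rewrite !mxE.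
Qed.

Lemma ac_tpos u : u != 0 -> 0 < t3 (mulc u u).
Proof.
move=> /nz3 hu; rewrite /t3 acE0 acE1 acE2.
have hs : 0 < co u 0 ^+ 2 + co u 1 ^+ 2 + co u 2 ^+ 2.
  have := sqr_ge0 (co u 0); have := sqr_ge0 (co u 1); have := sqr_ge0 (co u 2).
  by case: hu => /sq_pos h; lra.
move: hs; set p := co u 0; set q := co u 1; set r := co u 2 => hs.
have -> : p * p + c * (p * q + q * p) + c * (p * r + r * p) - c * (q * r + r * q) +
   (q * q + c * (q * p + p * q) + c * (q * r + r * q) - c * (p * r + r * p)) +
   (r * r + c * (r * p + p * r) + c * (r * q + q * r) - c * (p * q + q * p)) =
   (1 - c) * (p ^+ 2 + q ^+ 2 + r ^+ 2) + c * (p + q + r) ^+ 2 by ring.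
apply: ltr_wpDr; first by rewrite mulr_ge0 // sqr_ge0.
by rewrite mulr_gt0 // subr_gt0.
Qed.

Lemma ac_idem x : mulc x x = x -> [\/ x = 0, x = one_ac, t3 x = 1 | t3 x = 3 * kap - 1].
Proof.
move=> xi.
have h0 := congr1 (fun m : 'rV[R]_3 => co m 0) xi; have h1 := congr1 (fun m : 'rV[R]_3 => co m 1) xi.
have h2 := congr1 (fun m : 'rV[R]_3 => co m 2) xi.
rewrite /= acE0 in h0; rewrite /= acE1 in h1; rewrite /= acE2 in h2.
have hp : Eac c (co x 0) (co x 1) (co x 2) = 0.
  by apply/eqP; rewrite /Eac subr_eq0 -[X in _ == X]h0; apply/eqP; ring.
have hq : Eac c (co x 1) (co x 0) (co x 2) = 0.
  by apply/eqP; rewrite /Eac subr_eq0 -[X in _ == X]h1; apply/eqP; ring.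
have hr : Eac c (co x 2) (co x 0) (co x 1) = 0.
  by apply/eqP; rewrite /Eac subr_eq0 -[X in _ == X]h2; apply/eqP; ring.
case: (ac_class c4 c2 hp hq hr) => [[e0 e1 e2]|[e0 e1 e2]|e|e].
- by constructor 1; apply: vec3; rewrite ?e0 ?e1 ?e2 !mxE.
- by constructor 2; apply: vec3; rewrite ?e0 ?e1 ?e2 !one_acE.
- by constructor 3.
- by constructor 4.
Qed.

Lemma t3_one : t3 one_ac = 3 * kap.
Proof. by rewrite /t3 !one_acE //; ring. Qed.

Lemma t3_0 : t3 0 = 0.
Proof. by rewrite /t3 !mxE; ring. Qed.

Lemma ac_hval y : mulc y y = y -> y != 0 -> 1 <= t3 y /\ (t3 y = 1 \/ 1 <= t3 y).
Proof.
move=> yi y0; suff h : 1 <= t3 y by split => //; right.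
move: k1; rewrite -/kap => k1'.
case: (ac_idem yi) => [e|->|->|->]; first by rewrite e eqxx in y0.
- by rewrite t3_one; lra.
- by [].
- by lra.
Qed.

Lemma ac_hbig x : mulc x x = x -> (t3 x = 2 \/ 1 + 1 <= t3 x) -> x = one_ac.
Proof.
move=> xi ht; have ht' : 2 <= t3 x by case: ht => [->|]; lra.
move: k2; rewrite -/kap => k2'.
case: (ac_idem xi) => [e|//|e|e]; exfalso.
- by move: ht'; rewrite e t3_0; lra.
- by move: ht'; rewrite e; lra.
- by move: ht'; rewrite e; lra.
Qed.

Lemma ac_dec : decomposable mulc one_ac.
Proof.
split; first exact: ac_mul1.
exists [:: bvec R 2 0; one_ac - bvec R 2 0]; split => //; split; last first.
  by rewrite !big_cons big_nil addr0 addrCA subrr addr0.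
move=> z; rewrite !inE => /orP[] /eqP ->; split.
- apply/eqP => h; have := congr1 (fun m : 'rV[R]_3 => co m 0) h; rewrite bvecE //= mxE.
  by move/eqP; rewrite oner_eq0.
- by apply: vec3; rewrite ?acE0 ?acE1 ?acE2 !bvecE //=; ring.
- apply/eqP => h; have := congr1 (fun m : 'rV[R]_3 => co m 1) h; rewrite subE one_acE // bvecE //= mxE.
  by rewrite subr0 /kap => /eqP; rewrite invr_eq0 (negbTE c2).
- rewrite /is_idempotent; apply: vec3; rewrite ?acE0 ?acE1 ?acE2 !subE !one_acE // !bvecE //=;
  by rewrite /kap; field.
Qed.

Lemma dim3_big (A : {vspace 'rV[R]_3}) : (4 <= \dim A)%N -> False.
Proof. by have := dimvS (subvf A); rewrite dimvf dim_matrix => h1 h2; have := leq_trans h2 h1. Qed.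

Lemma ac_claim : NS_claim mulc.
Proof.
apply: (@gen_claim R 3 mulc one_ac t3 (@tabmulDl R 3 _) (@tabmulZl R 3 _) ac_mulC ac_mul1 t3D t3Z ac_tpos _ 1).
- by apply/eqP => h; have := congr1 (fun m : 'rV[R]_3 => co m 0) h; rewrite one_acE // mxE /kap => /eqP; rewrite invr_eq0 (negbTE c2).
- by lra.
- exact: ac_hval.
- exact: ac_hbig.
- exact: ac_dec.
- by move=> A /dim3_big.
Qed.
End ACalg.

Lemma claim_ac (R : realType) (c : R) (ka : R) : 0 < c -> 4 * c < 1 -> (1 + 2 * c) * ka = 1 -> 2 / 3 <= ka -> ka < 1 ->
  NS_claim (tabmul (tab_ac c)).
Proof.
move=> h0 h4 hk k1 k2.
have c2 : 1 + 2 * c != 0 by rewrite gt_eqF //; lra.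
have eka : (1 + 2 * c)^-1 = ka.
  by apply: (mulfI c2); rewrite mulfV // hk.
apply: ac_claim; rewrite ?eka //; try lra.
Qed.

Lemma claim2A (R : realType) : NS_claim (@mul2A R).
Proof. by apply: (@claim_ac R (1/8) (4/5)); lra. Qed.

Lemma claim3C (R : realType) : NS_claim (@mul3C R).
Proof. by apply: (@claim_ac R (1/64) (32/33)); lra. Qed.


Lemma big4 (R : realType) (F : 'I_4 -> R) : \sum_(i < 4) F i = F (inord 0) + F (inord 1) + F (inord 2) + F (inord 3).
Proof.
rewrite !big_ord_recl big_ord0 addr0 !addrA; congr (F _ + F _ + F _ + F _); apply/val_inj; by rewrite /= inordK.
Qed.

Lemma ord4 (k : 'I_4) : [\/ k = inord 0, k = inord 1, k = inord 2 | k = inord 3].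
Proof.
case: k => [[|[|[|[|m]]]] Hk] //; [constructor 1|constructor 2|constructor 3|constructor 4]; apply/val_inj; by rewrite /= inordK.
Qed.

Lemma vec4 (R : realType) (u v : 'rV[R]_4) : co u 0 = co v 0 -> co u 1 = co v 1 -> co u 2 = co v 2 -> co u 3 = co v 3 -> u = v.
Proof. by move=> h0 h1 h2 h3; apply/rowP => k; case: (ord4 k) => ->. Qed.

Lemma tabmul4E (R : realType) (T : 'I_4 -> 'I_4 -> 'rV[R]_4) u v k :
  tabmul T u v 0 k = u 0 (inord 0) * v 0 (inord 0) * T (inord 0) (inord 0) 0 k + u 0 (inord 0) * v 0 (inord 1) * T (inord 0) (inord 1) 0 k + u 0 (inord 0) * v 0 (inord 2) * T (inord 0) (inord 2) 0 k + u 0 (inord 0) * v 0 (inord 3) * T (inord 0) (inord 3) 0 k + u 0 (inord 1) * v 0 (inord 0) * T (inord 1) (inord 0) 0 k + u 0 (inord 1) * v 0 (inord 1) * T (inord 1) (inord 1) 0 k + u 0 (inord 1) * v 0 (inord 2) * T (inord 1) (inord 2) 0 k + u 0 (inord 1) * v 0 (inord 3) * T (inord 1) (inord 3) 0 k + u 0 (inord 2) * v 0 (inord 0) * T (inord 2) (inord 0) 0 k + u 0 (inord 2) * v 0 (inord 1) * T (inord 2) (inord 1) 0 k + u 0 (inord 2) * v 0 (inord 2) * T (inord 2) (inord 2) 0 k + u 0 (inord 2) * v 0 (inord 3) * T (inord 2) (inord 3) 0 k + u 0 (inord 3) * v 0 (inord 0) * T (inord 3) (inord 0) 0 k + u 0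 (inord 3) * v 0 (inord 1) * T (inord 3) (inord 1) 0 k + u 0 (inord 3) * v 0 (inord 2) * T (inord 3) (inord 2) 0 k + u 0 (inord 3) * v 0 (inord 3) * T (inord 3) (inord 3) 0 k.
Proof. rewrite tabmulE big4 !big4; ring. Qed.

Section A3.
Variable R : realType.
Local Notation mul := (@mul3A R).
Ltac a3simp := rewrite /mul3A tabmul4E /tab3A !inordK //= !mxE /= !inord_eq //= ?mulr1n ?mulr0n.

Lemma a3E0 (u v : 'rV[R]_4) : co (mul u v) 0 = co u 0 * co v 0
  + 1/16 * (co u 0 * co v 1 + co u 1 * co v 0 + co u 0 * co v 2 + co u 2 * co v 0)
  + 1/32 * (co u 1 * co v 2 + co u 2 * co v 1)
  + 2/9 * (co u 0 * co v 3 + co u 3 * co v 0)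
  - 1/9 * (co u 1 * co v 3 + co u 3 * co v 1 + co u 2 * co v 3 + co u 3 * co v 2).
Proof. by a3simp; field. Qed.

Lemma a3E1 (u v : 'rV[R]_4) : co (mul u v) 1 = co u 1 * co v 1
  + 1/16 * (co u 1 * co v 0 + co u 0 * co v 1 + co u 1 * co v 2 + co u 2 * co v 1)
  + 1/32 * (co u 0 * co v 2 + co u 2 * co v 0)
  + 2/9 * (co u 1 * co v 3 + co u 3 * co v 1)
  - 1/9 * (co u 0 * co v 3 + co u 3 * co v 0 + co u 2 * co v 3 + co u 3 * co v 2).
Proof. by a3simp; field. Qed.

Lemma a3E2 (u v : 'rV[R]_4) : co (mul u v) 2 = co u 2 * co v 2
  + 1/16 * (co u 2 * co v 0 + co u 0 * co v 2 + co u 2 * co v 1 + co u 1 * co v 2)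
  + 1/32 * (co u 0 * co v 1 + co u 1 * co v 0)
  + 2/9 * (co u 2 * co v 3 + co u 3 * co v 2)
  - 1/9 * (co u 0 * co v 3 + co u 3 * co v 0 + co u 1 * co v 3 + co u 3 * co v 1).
Proof. by a3simp; field. Qed.

Lemma a3E3 (u v : 'rV[R]_4) : co (mul u v) 3 = co u 3 * co v 3
  - 135/2048 * (co u 0 * co v 1 + co u 1 * co v 0 + co u 0 * co v 2 + co u 2 * co v 0 + co u 1 * co v 2 + co u 2 * co v 1)
  + 5/32 * (co u 0 * co v 3 + co u 3 * co v 0 + co u 1 * co v 3 + co u 3 * co v 1 + co u 2 * co v 3 + co u 3 * co v 2).
Proof. by a3simp; field. Qed.

End A3.


Definition Ea (R : realType) (a b c s : R) := 144 * a ^+ 2 + 18 * a * b + 18 * a * c + 9 * b * c + 32 * s * (2 * a - b - c) - 144 * a.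
Definition Eu (R : realType) (p q r s : R) := 1024 * s ^+ 2 - 135 * (p * q + p * r + q * r) + 320 * s * (p + q + r) - 1024 * s.
Definition Lf (R : realType) (a b c s : R) := 48 * a + 48 * b + 3 * c + 32 * s - 48.
Definition mid (R : realType) (T : R) := (1 <= T /\ T < 2 /\ (T = 1 \/ 8/5 <= T)) \/ T = 81/35.

Ltac solve_mid := rewrite /mid; first [ right; lra | left; split; [lra|split; [lra| first [left; lra | right; lra]]]].

Lemma two_eq (R : realType) (x z s : R) : Ea x x z s = 0 -> Ea z x x s = 0 -> Eu x x z s = 0 -> Lf x z x s = 0 ->
  mid (2 * x + z + 8/5 * s).
Proof.
move=> h1 h2 h3 h4.
have hP : 3726 * (x * (9 * x - 8) * (63 * x + 8) * (21 * x - 16)) = ((273 * 1000 + 861)*x*x - (46 * 1000 + 764)*x*z - (52 * 1000 + 768)*x*s - (173 * 1000 + 880)*x + (13 * 1000 + 392)*z*z + (96 * 1000 + 256)*z*s - (23 * 1000 + 328)*z - 3072*s*s - (14 * 1000 + 592)*s - (26 * 1000 + 496)) * Ea x x z s + ((20 * 1000 + 169)*x*z - (81 * 1000 + 24)*x*s + (18 * 1000 + 360)*x - (23 * 1000 + 904)*z*s - (62 * 1000 + 464)*s*s + (80 * 1000 + 128)*s) * Ea z x x s + (- 3808*x*s + 1224*x + (12 * 1000 + 96)*z*z + 3808*z*s - (10 * 1000 + 440)*z) * Eu x x z s.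
  by rewrite /Ea /Eu /Lf; ring.
rewrite ?h1 ?h2 ?h3 ?h4 ?mulr0 ?addr0 in hP.
have hs : 180 * (2048 * s - (- (35 * 1000 + 721)*x*x*x + (40 * 1000 + 824)*x*x - 8640*x)) = ((41 * 1000 + 40)*x - 2700*z - (11 * 1000 + 840)*s - (10 * 1000 + 800)) * Ea x x z s + (4995*x - 5920*s) * Ea z x x s + (1953*x + 2394*z + 2016*s - 2304) * Eu x x z s + (- (64 * 1000 + 512)*s*s + (41 * 1000 + 472)*s) * Lf x z x s.
  by rewrite /Ea /Eu /Lf; ring.
rewrite ?h1 ?h2 ?h3 ?h4 ?mulr0 ?addr0 in hs.
have hz : 540 * (1024 * z - ((11 * 1000 + 907)*x*x*x - (13 * 1000 + 608)*x*x + 1792*x + 1024)) = (- (41 * 1000 + 40)*x + 2700*z + (11 * 1000 + 840)*s + (10 * 1000 + 800)) * Ea x x z s + (- 4995*x + 5920*s) * Ea z x x s + (- 1953*x - 2394*z - 2016*s + 2304) * Eu x x z s + ((64 * 1000 + 512)*s*s - (41 * 1000 + 472)*s + (11 * 1000 + 520)) * Lf x z x s.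
  by rewrite /Ea /Eu /Lf; ring.
rewrite ?h1 ?h2 ?h3 ?h4 ?mulr0 ?addr0 in hz.
have es : s = (- (35 * 1000 + 721)*x*x*x + (40 * 1000 + 824)*x*x - 8640*x) / 2048.
  by move/eqP: hs; rewrite mulf_eq0 subr_eq0 => /orP[/eqP|/eqP <-]; [clear; lra|field].
have ez : z = ((11 * 1000 + 907)*x*x*x - (13 * 1000 + 608)*x*x + 1792*x + 1024) / 1024.
  by move/eqP: hz; rewrite mulf_eq0 subr_eq0 => /orP[/eqP|/eqP <-]; [clear; lra|field].
have hP' : x * (9 * x - 8) * (63 * x + 8) * (21 * x - 16) = 0.
  move/eqP: hP; rewrite mulf_eq0 => /orP[/eqP|/eqP //]; clear; lra.
clear hP hs hz h1 h2 h3 h4.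
move/eqP: hP'; rewrite !mulf_eq0 => /orP[/orP[/orP[]|]|] /eqP e.
- have ex : x = 0 by lra.
  have -> : 2 * x + z + 8/5 * s = 1 by rewrite es ez ex; field.
  by solve_mid.
- have ex : x = 8/9 by lra.
  have -> : 2 * x + z + 8/5 * s = 8/5 by rewrite es ez ex; field.
  by solve_mid.
- have ex : x = -8/63 by lra.
  have -> : 2 * x + z + 8/5 * s = 12/7 by rewrite es ez ex; field.
  by solve_mid.
- have ex : x = 16/21 by lra.
  have -> : 2 * x + z + 8/5 * s = 81/35 by rewrite es ez ex; field.
  by solve_mid.
Qed.

Lemma zero3 (R : realType) (a b : R) : 3 * a * b = 0 -> a = 0 \/ b = 0.
Proof.
move/eqP; rewrite !mulf_eq0 => /orP[/orP[/eqP h|/eqP h]|/eqP h]; [|by left|by right].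
by move: h; clear; lra.
Qed.

Lemma all_eq (R : realType) (x s : R) : Ea x x x s = 0 -> Eu x x x s = 0 ->
  [\/ x = 0 /\ s = 0, x = 16/21 /\ s = 9/14 | mid (3 * x + 8/5 * s)].
Proof.
move=> h1 h2.
have : 9 * (x * (21 * x - 16)) = 0 by rewrite -h1 /Ea; ring.
move/eqP; rewrite !mulf_eq0 => /orP[/eqP h|/orP[/eqP ex|/eqP h]].
- by move: h; clear; lra.
- subst x.
  have : 1024 * (s * (s - 1)) = 0 by rewrite -h2 /Eu; ring.
  move/eqP; rewrite !mulf_eq0 => /orP[/eqP k|/orP[/eqP es|/eqP k]].
  + by move: k; clear; lra.
  + by constructor 1.
  + have -> : 3 * 0 + 8/5 * s = 8/5 by move: k; clear; lra.
    by constructor 3; solve_mid.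
- have ex : x = 16/21 by move: h; clear; lra.
  subst x.
  have : 1024 * ((s - 9/14) * (s + 5/14)) = 0 by rewrite -h2 /Eu; field.
  move/eqP; rewrite !mulf_eq0 => /orP[/eqP k|/orP[/eqP es|/eqP k]].
  + by move: k; clear; lra.
  + by constructor 2; split => //; move: es; clear; lra.
  + have -> : 3 * (16/21) + 8/5 * s = 12/7 by move: k; clear; lra.
    by constructor 3; solve_mid.
Qed.

Lemma Ea_sym (R : realType) (a b c s : R) : Ea a b c s = Ea a c b s.
Proof. by rewrite /Ea; ring. Qed.

Lemma a3_class (R : realType) (p q r s : R) : Ea p q r s = 0 -> Ea q p r s = 0 -> Ea r p q s = 0 -> Eu p q r s = 0 ->
  [\/ [/\ p = 0, q = 0, r = 0 & s = 0], [/\ p = 16/21, q = 16/21, r = 16/21 & s = 9/14] | mid (p + q + r + 8/5 * s)].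
Proof.
move=> h0 h1 h2 h3.
have d01 : 3 * (p - q) * Lf p q r s = 0 by rewrite -[RHS](subrr 0) -{1}h0 -h1 /Ea /Lf; ring.
have d02 : 3 * (p - r) * Lf p r q s = 0 by rewrite -[RHS](subrr 0) -{1}h0 -h2 /Ea /Lf; ring.
case: (zero3 d01) => [/eqP|l01]; [rewrite subr_eq0 => /eqP e01|];
  case: (zero3 d02) => [/eqP|l02]; [rewrite subr_eq0 => /eqP e02| |rewrite subr_eq0 => /eqP e02|].
- subst q r.
  case: (all_eq h0 h3) => [[-> ->]|[-> ->]|hm]; [by constructor 1|by constructor 2|constructor 3].
  by have -> : p + p + p + 8/5 * s = 3 * p + 8/5 * s by ring.
- subst q.
  have := two_eq h0 h2 h3 l02.
  by constructor 3; have -> : p + p + r + 8/5 * s = 2 * p + r + 8/5 * s by ring.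
- subst r.
  have e1 : Ea p p q s = 0 by rewrite Ea_sym.
  have e3 : Eu p p q s = 0 by rewrite -h3 /Eu; ring.
  have := two_eq e1 h1 e3 l01.
  by constructor 3; have -> : p + q + p + 8/5 * s = 2 * p + q + 8/5 * s by ring.
- have : 45 * (q - r) = 0 by rewrite -[RHS](subrr 0) -{1}l01 -l02 /Lf; ring.
  move/eqP; rewrite mulf_eq0 => /orP[/eqP h|]; first by move: h; clear; lra.
  rewrite subr_eq0 => /eqP eqr; subst r.
  have e1 : Ea q q p s = 0 by rewrite Ea_sym.
  have e3 : Eu q q p s = 0 by rewrite -h3 /Eu; ring.
  have e4 : Lf q p q s = 0 by rewrite -l01 /Lf; ring.
  have := two_eq e1 h0 e3 e4.
  by constructor 3; have -> : p + q + q + 8/5 * s = 2 * q + p + 8/5 * s by ring.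
Qed.


Section A3S.
Variable R : realType.
Local Notation mul := (@mul3A R).

Definition one3 : 'rV[R]_4 := (16/21) *: (bvec R 3 0 + bvec R 3 1 + bvec R 3 2) + (9/14) *: bvec R 3 3.
Definition t4 (u : 'rV[R]_4) := co u 0 + co u 1 + co u 2 + 8/5 * co u 3.

Lemma one3E i : (i <= 2)%N -> co one3 i = 16/21.
Proof. by case: i => [|[|[|//]]] _; rewrite /one3 !mxE /= !inord_eq //= ?mulr1n ?mulr0n; ring. Qed.
Lemma one3E0 : co one3 0 = 16/21. Proof. exact: one3E. Qed.
Lemma one3E1 : co one3 1 = 16/21. Proof. exact: one3E. Qed.
Lemma one3E2 : co one3 2 = 16/21. Proof. exact: one3E. Qed.
Lemma one3E3 : co one3 3 = 9/14.
Proof. by rewrite /one3 !mxE /= !inord_eq //= ?mulr1n ?mulr0n; ring. Qed.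

Lemma subE4 (u v : 'rV[R]_4) i : co (u - v) i = co u i - co v i.
Proof. by rewrite !mxE. Qed.

Ltac a3rw := rewrite ?a3E0 ?a3E1 ?a3E2 ?a3E3.

Lemma a3_mulC u v : mul u v = mul v u.
Proof. by apply: vec4; a3rw; ring. Qed.

Lemma a3_mul1 u : mul one3 u = u.
Proof. by apply: vec4; a3rw; rewrite ?one3E0 ?one3E1 ?one3E2 ?one3E3; field. Qed.

Lemma t4D u v : t4 (u + v) = t4 u + t4 v.
Proof. by rewrite /t4 !mxE; ring. Qed.
Lemma t4Z a u : t4 (a *: u) = a * t4 u.
Proof. by rewrite /t4 !mxE; ring. Qed.
Lemma t4_0 : t4 0 = 0.
Proof. by rewrite /t4 !mxE; ring. Qed.
Lemma t4_one : t4 one3 = 116/35.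
Proof. by rewrite /t4 one3E0 one3E1 one3E2 one3E3; field. Qed.

Lemma nz4 (u : 'rV[R]_4) : u != 0 -> (co u 0 != 0) || (co u 1 != 0) || (co u 2 != 0) || (co u 3 != 0).
Proof.
move=> u0; apply: contraNT u0; rewrite !negb_or !negbK => /andP[/andP[/andP[/eqP h0 /eqP h1] /eqP h2] /eqP h3].
by apply/eqP; apply: vec4; rewrite !mxE.
Qed.

Lemma a3_tpos u : u != 0 -> 0 < t4 (mul u u).
Proof.
move=> /nz4 hu; rewrite /t4; a3rw.
have hs : 0 < co u 0 ^+ 2 + co u 1 ^+ 2 + co u 2 ^+ 2 \/ 0 < co u 3 ^+ 2.
  have := sqr_ge0 (co u 0); have := sqr_ge0 (co u 1); have := sqr_ge0 (co u 2).
  move: hu => /orP[/orP[/orP[]|]|] /sq_pos h; [left|left|left|right] => //; lra.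
move: hs; set p := co u 0; set q := co u 1; set r := co u 2; set s := co u 3 => hs.
rewrite [X in 0 < X](_ : _ = 243/256 * (p ^+ 2 + q ^+ 2 + r ^+ 2)
   + 13/256 * (p + q + r + 64/13 * s) ^+ 2 + 24/65 * s ^+ 2); last by field.
have h1 := sqr_ge0 (p + q + r + 64/13 * s).
have h2 := sqr_ge0 s.
have h3 : 0 <= p ^+ 2 + q ^+ 2 + r ^+ 2 by rewrite !addr_ge0 ?sqr_ge0.
move: hs h1 h2 h3; set X := p ^+ 2 + q ^+ 2 + r ^+ 2; set Y := (p + q + r + 64/13 * s) ^+ 2;
  set Z := s ^+ 2; clear; lra.
Qed.

Lemma a3_idem x : mul x x = x -> [\/ x = 0, x = one3 | mid (t4 x)].
Proof.
move=> xi.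
have hp : Ea (co x 0) (co x 1) (co x 2) (co x 3) = 0.
  have : Ea (co x 0) (co x 1) (co x 2) (co x 3) = 144 * (co (mul x x) 0 - co x 0) by rewrite a3E0 /Ea; field.
  by rewrite xi subrr mulr0.
have hq : Ea (co x 1) (co x 0) (co x 2) (co x 3) = 0.
  have : Ea (co x 1) (co x 0) (co x 2) (co x 3) = 144 * (co (mul x x) 1 - co x 1) by rewrite a3E1 /Ea; field.
  by rewrite xi subrr mulr0.
have hr : Ea (co x 2) (co x 0) (co x 1) (co x 3) = 0.
  have : Ea (co x 2) (co x 0) (co x 1) (co x 3) = 144 * (co (mul x x) 2 - co x 2) by rewrite a3E2 /Ea; field.
  by rewrite xi subrr mulr0.
have hu : Eu (co x 0) (co x 1) (co x 2) (co x 3) = 0.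
  have : Eu (co x 0) (co x 1) (co x 2) (co x 3) = 1024 * (co (mul x x) 3 - co x 3) by rewrite a3E3 /Eu; field.
  by rewrite xi subrr mulr0.
case: (a3_class hp hq hr hu) => [[e0 e1 e2 e3]|[e0 e1 e2 e3]|hm].
- by constructor 1; apply: vec4; rewrite ?e0 ?e1 ?e2 ?e3 !mxE.
- by constructor 2; apply: vec4; rewrite ?e0 ?e1 ?e2 ?e3 ?one3E0 ?one3E1 ?one3E2 ?one3E3.
- by constructor 3.
Qed.

Lemma a3_hval y : mul y y = y -> y != 0 -> 1 <= t4 y /\ (t4 y = 1 \/ 8/5 <= t4 y).
Proof.
move=> yi y0; case: (a3_idem yi) => [e|->|].
- by move: y0; rewrite e eqxx.
- by rewrite t4_one; split; [lra|right; lra].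
- rewrite /mid; move: (t4 y) => T; clear.
  case=> [[h1 [h2 h3]]|->]; split => //; try lra; right; lra.
Qed.

Lemma a3_hbig x : mul x x = x -> (t4 x = 2 \/ 1 + 8/5 <= t4 x) -> x = one3.
Proof.
move=> xi ht; case: (a3_idem xi) => [e|//|hm]; exfalso.
- by move: ht; rewrite e t4_0; clear; lra.
- move: ht hm; rewrite /mid; move: (t4 x) => T; clear.
  by case=> h [[h1 [h2 h3]]|h']; lra.
Qed.

Lemma a3_dec : decomposable mul one3.
Proof.
split; first exact: a3_mul1.
exists [:: bvec R 3 0; one3 - bvec R 3 0]; split => //; split; last first.
  by rewrite !big_cons big_nil addr0 addrCA subrr addr0.
move=> z; rewrite !inE => /orP[] /eqP ->; split.
- apply/eqP => h; have := congr1 (fun m : 'rV[R]_4 => co m 0) h; rewrite bvecE //= mxE.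
  by move/eqP; rewrite oner_eq0.
- by apply: vec4; a3rw; rewrite !bvecE //=; field.
- apply/eqP => h; have := congr1 (fun m : 'rV[R]_4 => co m 1) h; rewrite subE4 one3E1 bvecE //= mxE.
  by clear; lra.
- by rewrite /is_idempotent; apply: vec4; a3rw; rewrite !subE4 ?one3E0 ?one3E1 ?one3E2 ?one3E3 !bvecE //=; field.
Qed.

Lemma a3_big (A : {vspace 'rV[R]_4}) : (4 <= \dim A)%N -> is_associative_on mul A -> False.
Proof.
move=> dA hA.
have Af : A = fullv by apply/eqP; rewrite eqEdim subvf dimvf dim_matrix.
have := hA (bvec R 3 0) (bvec R 3 0) (bvec R 3 1); rewrite Af !memvf => /(_ isT isT isT).
move/(congr1 (fun m : 'rV[R]_4 => co m 3)); a3rw; a3rw; rewrite !bvecE //=.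
by clear; lra.
Qed.

Lemma claim3A : NS_claim mul.
Proof.
apply: (@gen_claim R 4 mul one3 t4 (@tabmulDl R 4 _) (@tabmulZl R 4 _) a3_mulC a3_mul1 t4D t4Z a3_tpos _ (8/5)).
- by apply/eqP => h; have := congr1 (fun m : 'rV[R]_4 => co m 3) h; rewrite one3E3 mxE; clear; lra.
- by clear; lra.
- exact: a3_hval.
- exact: a3_hbig.
- exact: a3_dec.
- exact: a3_big.
Qed.
End A3S.


Theorem mainTheorem9 (R : realType) :
  NS_claim (@mul2A R) /\ NS_claim (@mul3A R) /\ NS_claim (@mul3C R).
Proof.
split; first exact: claim2A.
split; first exact: claim3A.
exact: claim3C.
Qed.
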